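(* Let $\mathbf A$ be a residuated semigroup satisfying $(x/x)y=y(x/x)$ for all $x,y\in A$, and write $1_x:=x/x$. Then for all $x,y\in A$: \[ 1_x\le 1_{xy},\ 1_y\le 1_{xy},\ 1_x\le 1_{x/y},\ 1_y\le 1_{x/y},\ 1_x\le 1_{y\backslash x},\ 1_y\le 1_{y\backslash x}, \] and consequently $1_x1_y\le 1_{xy}$, $1_x1_y\le 1_{x/y}$, $1_x1_y\le 1_{y\backslash x}$.
   Context: A residuated semigroup is a structure $\langle A,\le,\cdot,\backslash,/\rangle$ where $\langle A,\le\rangle$ is a poset, $\langle A,\cdot\rangle$ is a semigroup (we write $xy$ for $x\cdot y$), and for all $x,y,z$: $xy\le z\iff x\le z/y\iff y\le x\backslash z$. *)

(* Defs.v *)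
Record residuated_semigroup := {
  rs_car :> Type;
  rs_le : rs_car -> rs_car -> Prop;
  rs_mul : rs_car -> rs_car -> rs_car;
  rs_ldiv : rs_car -> rs_car -> rs_car;
  rs_rdiv : rs_car -> rs_car -> rs_car;
  rs_le_refl : forall x, rs_le x x;
  rs_le_antisym : forall x y, rs_le x y -> rs_le y x -> x = y;
  rs_le_trans : forall x y z, rs_le x y -> rs_le y z -> rs_le x z;
  rs_mulA : forall x y z, rs_mul x (rs_mul y z) = rs_mul (rs_mul x y) z;
  rs_res_r : forall x y z, rs_le (rs_mul x y) z <-> rs_le x (rs_rdiv z y);
  rs_res_l : forall x y z, rs_le (rs_mul x y) z <-> rs_le y (rs_ldiv x z)
}.

Arguments rs_le {_}.
Arguments rs_mul {_}.
Arguments rs_ldiv {_}.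
Arguments rs_rdiv {_}.

Definition unit_of {A : residuated_semigroup} (x : A) : A := rs_rdiv x x.

(* Main.v *)
Require Import Defs.

Section S.
Variable A : residuated_semigroup.
Implicit Types a b c x y z w : A.

Lemma key a w : rs_le (rs_mul a w) w -> rs_le a (unit_of w).
Proof. intro H. apply (proj1 (rs_res_r A _ _ _)). exact H. Qed.

Lemma key' a w : rs_le a (unit_of w) -> rs_le (rs_mul a w) w.
Proof. intro H. apply (proj2 (rs_res_r A _ _ _)). exact H. Qed.

Lemma monol a b c : rs_le a b -> rs_le (rs_mul a c) (rs_mul b c).
Proof. intro H. apply (proj2 (rs_res_r A _ _ _)).
  eapply rs_le_trans; [exact H|]. apply (proj1 (rs_res_r A _ _ _)). apply rs_le_refl. Qed.

Lemma monor a b c : rs_le a b -> rs_le (rs_mul c a) (rs_mul c b).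
Proof. intro H. apply (proj2 (rs_res_l A _ _ _)).
  eapply rs_le_trans; [exact H|]. apply (proj1 (rs_res_l A _ _ _)). apply rs_le_refl. Qed.

Lemma ux x : rs_le (rs_mul (unit_of x) x) x.
Proof. apply key'. apply rs_le_refl. Qed.

Lemma rdm x y : rs_le (rs_mul (rs_rdiv x y) y) x.
Proof. apply (proj2 (rs_res_r A _ _ _)). apply rs_le_refl. Qed.

Lemma mld x y : rs_le (rs_mul y (rs_ldiv y x)) x.
Proof. apply (proj2 (rs_res_l A _ _ _)). apply rs_le_refl. Qed.

Lemma prod_le x y w : rs_le (unit_of x) (unit_of w) -> rs_le (unit_of y) (unit_of w) ->
  rs_le (rs_mul (unit_of x) (unit_of y)) (unit_of w).
Proof. intros H1 H2. apply key. rewrite <- rs_mulA.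
  eapply rs_le_trans; [apply monor, key', H2|]. apply key', H1. Qed.
End S.

Theorem lemma3p3 (A : residuated_semigroup)
  (Hcomm : forall x y : A, rs_mul (unit_of x) y = rs_mul y (unit_of x)) :
  forall x y : A,
    rs_le (unit_of x) (unit_of (rs_mul x y)) /\
    rs_le (unit_of y) (unit_of (rs_mul x y)) /\
    rs_le (unit_of x) (unit_of (rs_rdiv x y)) /\
    rs_le (unit_of y) (unit_of (rs_rdiv x y)) /\
    rs_le (unit_of x) (unit_of (rs_ldiv y x)) /\
    rs_le (unit_of y) (unit_of (rs_ldiv y x)) /\
    rs_le (rs_mul (unit_of x) (unit_of y)) (unit_of (rs_mul x y)) /\
    rs_le (rs_mul (unit_of x) (unit_of y)) (unit_of (rs_rdiv x y)) /\
    rs_le (rs_mul (unit_of x) (unit_of y)) (unit_of (rs_ldiv y x)).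
Proof.
  intros x y.
  assert (H1 : rs_le (unit_of x) (unit_of (rs_mul x y))).
  { apply key. rewrite rs_mulA. apply monol, ux. }
  assert (H2 : rs_le (unit_of y) (unit_of (rs_mul x y))).
  { apply key. rewrite Hcomm, <- rs_mulA. apply monor. rewrite <- Hcomm. apply ux. }
  assert (H3 : rs_le (unit_of x) (unit_of (rs_rdiv x y))).
  { apply key. apply (proj1 (rs_res_r A _ _ _)). rewrite <- rs_mulA.
    eapply rs_le_trans; [apply monor, rdm|]. apply ux. }
  assert (H4 : rs_le (unit_of y) (unit_of (rs_rdiv x y))).
  { apply key. apply (proj1 (rs_res_r A _ _ _)). rewrite Hcomm, <- rs_mulA.
    eapply rs_le_trans; [apply monor, ux|]. apply rdm. }
  assert (H5 : rs_le (unit_of x) (unit_of (rs_ldiv y x))).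
  { apply key. apply (proj1 (rs_res_l A _ _ _)). rewrite rs_mulA, <- Hcomm, <- rs_mulA.
    eapply rs_le_trans; [apply monor, mld|]. apply ux. }
  assert (H6 : rs_le (unit_of y) (unit_of (rs_ldiv y x))).
  { apply key. apply (proj1 (rs_res_l A _ _ _)). rewrite rs_mulA, <- Hcomm.
    eapply rs_le_trans; [apply monol, ux|]. apply mld. }
  repeat split; try assumption; apply prod_le; assumption.
Qed.
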